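(* Let $X=\{1,\dots,n\}$, let $\phi:X\leadsto X$ be a set-valued map which is a surjection (every $j\in X$ belongs to $\phi(i)$ for some $i$), let $T\in\mathbb{N}$ and $I=\{0,1,\dots,T\}$. Let $g:X\to\mathbb{R}$ and $g_0=B_1^T(g)$. Let $U:I\times X\to\mathbb{R}$ be given by $U(k,x_k)=\min\{g_0(x(0))\mid x\in S_\phi(k,x_k)\}$, set $g_T=U(T,\cdot)$, and let $W:I\times X\to\mathbb{R}$ be given by $W(k,x_k)=\max\{g_T(x(T))\mid x\in S_\phi(k,x_k)\}$. Then $U(0,\cdot)=W(0,\cdot)$.
   Context: A trajectory is a map $x:I\to X$ with $x(i+1)\in\phi(x(i))$ for $i=0,\dots,T-1$; $S_\phi(k,x_k)$ is the set of trajectories with $x(k)=x_k$. For $h:X\to\mathbb{R}$, the backward one-step operator is $B_1(h)(i)=\max\{h(j)\mid j\in\phi(i)\}$, and $B_1^T$ is its $T$-fold iterate. *)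

(* Defs.v *)
From mathcomp Require Import all_boot all_order all_algebra.
From mathcomp Require Import reals.
Set Implicit Arguments. Unset Strict Implicit. Unset Printing Implicit Defensive.
Import Order.TTheory GRing.Theory Num.Theory.
Local Open Scope ring_scope.

(* Maximum / minimum of f over a finite set A (value 0 if A is empty;
   in the theorem all sets involved are nonempty). *)
Definition fmax (T : finType) (R : realDomainType) (A : {pred T}) (f : T -> R) : R :=
  if [pick x in A] is Some a then \big[Num.max/f a]_(x in A) f x else 0.
Definition fmin (T : finType) (R : realDomainType) (A : {pred T}) (f : T -> R) : R :=
  if [pick x in A] is Some a then \big[Num.min/f a]_(x in A) f x else 0.

Definition is_traj (n T : nat) (phi : 'I_n -> {set 'I_n})
  (x : {ffun 'I_T.+1 -> 'I_n}) : bool :=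
  [forall i : 'I_T, x (inord i.+1) \in phi (x (inord i))].

Definition Straj (n T : nat) (phi : 'I_n -> {set 'I_n}) (k : 'I_T.+1) (xk : 'I_n)
  : {pred {ffun 'I_T.+1 -> 'I_n}} :=
  [pred x | is_traj phi x && (x k == xk)].

Definition B1 (n : nat) (R : realDomainType) (phi : 'I_n -> {set 'I_n})
  (h : 'I_n -> R) : 'I_n -> R :=
  fun i => fmax (mem (phi i)) h.

(* Main.v *)
Require Import Defs.
From mathcomp Require Import all_boot all_order all_algebra.
From mathcomp Require Import reals.
Import Order.TTheory GRing.Theory Num.Theory.
Local Open Scope ring_scope.

Section F.
Variables (T : finType) (R : realDomainType) (A : {pred T}) (f : T -> R).

Lemma fmax_ge b : b \in A -> f b <= fmax A f.
Proof.
move=> bA; rewrite /fmax; case: pickP => [a aA|/(_ b)]; last by rewrite bA.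
by rewrite (bigD1 b) //= le_max lexx.
Qed.

Lemma fmax_ub y : (forall a, a \in A -> f a <= y) -> (exists a, a \in A) -> fmax A f <= y.
Proof.
move=> H [b bA]; rewrite /fmax; case: pickP => [a aA|/(_ b)]; last by rewrite bA.
elim/big_ind: _ => //; first by apply: H.
by move=> u v hu hv; rewrite ge_max hu hv.
Qed.

Lemma fmax_att b : b \in A -> exists2 a, a \in A & fmax A f = f a.
Proof.
move=> bA; rewrite /fmax; case: pickP => [a aA|/(_ b)]; last by rewrite bA.
elim/big_ind: _ => //; first by exists a.
  move=> u v [c cA ->] [d dA ->]; case: (leP (f c) (f d)) => _; [by exists d | by exists c].
by move=> i iA; exists i.
Qed.

Lemma fmin_le b : b \in A -> fmin A f <= f b.
Proof.
move=> bA; rewrite /fmin; case: pickP => [a aA|/(_ b)]; last by rewrite bA.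
by rewrite (bigD1 b) //= ge_min lexx.
Qed.

Lemma fmin_lb y : (forall a, a \in A -> y <= f a) -> (exists a, a \in A) -> y <= fmin A f.
Proof.
move=> H [b bA]; rewrite /fmin; case: pickP => [a aA|/(_ b)]; last by rewrite bA.
elim/big_ind: _ => //; first by apply: H.
by move=> u v hu hv; rewrite le_min hu hv.
Qed.
End F.
Arguments fmax_ge {T R A} f {b}.
Arguments fmax_ub {T R A f} y.
Arguments fmax_att {T R A} f {b}.
Arguments fmin_le {T R A f b}.
Arguments fmin_lb {T R A f} y.

Section Main.
Variables (R : realType) (n T : nat) (phi : 'I_n -> {set 'I_n}).
Hypothesis phi_ne : forall i, phi i != set0.
Variable g : 'I_n -> R.

Let h k := iter k (B1 phi) g.

Lemma hS k i : h k.+1 i = fmax (mem (phi i)) (h k).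
Proof. by []. Qed.

Lemma traj_bound (z : {ffun 'I_T.+1 -> 'I_n}) : is_traj phi z ->
  forall m, (m <= T)%N -> h (T - m) (z (inord m)) <= h T (z ord0).
Proof.
move=> /forallP tz; elim=> [|m IH] lt.
  by rewrite subn0 (_ : inord 0 = ord0) //; apply: val_inj; rewrite /= inordK.
apply: le_trans (IH (ltnW lt)).
rewrite -(subnSK lt) hS; apply: fmax_ge.
by have := tz (Ordinal lt).
Qed.

Definition c k i := odflt i [pick j in phi i | h k j == h k.+1 i].

Lemma c_spec k i : c k i \in phi i /\ h k (c k i) = h k.+1 i.
Proof.
have [b bP] := set0Pn _ (phi_ne i).
have [a aP e] := fmax_att (h k) bP.
rewrite /c; case: pickP => [j /andP[jP /eqP ->]|/(_ a)] //.
by rewrite aP hS e eqxx.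
Qed.

Variable x0 : 'I_n.

Fixpoint y m := match m with 0 => x0 | m'.+1 => c (T - m'.+1) (y m') end.

Lemma y_inv m : (m <= T)%N -> h (T - m) (y m) = h T x0.
Proof.
elim: m => [|m IH] lt; first by rewrite subn0.
rewrite /= (c_spec _ _).2 subnSK //; exact: IH (ltnW lt).
Qed.

Definition xw : {ffun 'I_T.+1 -> 'I_n} := [ffun i : 'I_T.+1 => y i].

Lemma xw_traj : is_traj phi xw.
Proof.
apply/forallP => i; have l1 : (i.+1 < T.+1)%N by rewrite ltnS.
have l2 : (i < T.+1)%N by rewrite ltnS ltnW.
rewrite !ffunE !inordK //=.
exact: (c_spec _ _).1.
Qed.

Lemma xw0 : xw ord0 = x0. Proof. by rewrite ffunE. Qed.

Lemma xwT : g (xw ord_max) = h T x0.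
Proof. by rewrite ffunE -(y_inv _ (leqnn T)) subnn. Qed.

Lemma traj_end (z : {ffun 'I_T.+1 -> 'I_n}) : is_traj phi z ->
  g (z ord_max) <= h T (z ord0).
Proof.
move=> tz; have := traj_bound _ tz _ (leqnn T).
by rewrite subnn (_ : inord T = ord_max) //; apply: val_inj; rewrite /= inordK.
Qed.

End Main.

Theorem proposition5p1 (R : realType) (n T : nat) (phi : 'I_n -> {set 'I_n})
  (phi_ne : forall i, phi i != set0)
  (phi_surj : forall j, exists i, j \in phi i)
  (g : 'I_n -> R) :
  let g0 := iter T (B1 phi) g in
  let U := fun (k : 'I_T.+1) (xk : 'I_n) =>
             fmin (Straj phi k xk) (fun x => g0 (x ord0)) in
  let gT := U ord_max in
  let W := fun (k : 'I_T.+1) (xk : 'I_n) =>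
             fmax (Straj phi k xk) (fun x => gT (x ord_max)) in
  forall x0 : 'I_n, U ord0 x0 = W ord0 x0.
Proof.
move=> g0 U gT W x0; rewrite /W /gT /U /g0.
set H := iter T (B1 phi) g.
set X := xw R n T phi g x0.
have Xt : is_traj phi X := xw_traj R n T phi phi_ne g x0.
have X0 : X ord0 = x0 := xw0 R n T phi g x0.
have XT : g (X ord_max) = H x0 := xwT R n T phi phi_ne g x0.
have xS : X \in Straj phi ord0 x0 by rewrite inE Xt X0 eqxx.
have zS : forall z : {ffun 'I_T.+1 -> 'I_n}, z \in Straj phi ord0 x0 ->
   is_traj phi z /\ z ord0 = x0 by move=> z; rewrite inE => /andP[-> /eqP].
have U0 : fmin (Straj phi (ord0 : 'I_T.+1) x0) (fun x => H (x ord0)) = H x0.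
  have := fmin_le (f := fun x : {ffun 'I_T.+1 -> 'I_n} => H (x ord0)) xS.
  rewrite /= X0 => h1; apply/eqP; rewrite eq_le h1 /=.
  apply: fmin_lb; last by exists X.
  by move=> a /zS[_ ->].
rewrite U0; apply/eqP; rewrite eq_le; apply/andP; split.
  set V := fun y => _.
  apply: (le_trans _ (fmax_ge V xS)); rewrite /V.
  apply: fmin_lb; last by exists X; rewrite inE Xt eqxx.
  move=> w; rewrite inE => /andP[tw /eqP e].
  by rewrite -XT -e; exact: (traj_end R n T phi g w tw).
apply: fmax_ub; last by exists X.
move=> z /zS[tz e]; rewrite -e; apply: fmin_le.
by rewrite inE tz eqxx.
Qed.
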